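(* The restriction $\lambda$ of the Lebesgue measure on $\mathbb R$ to the lattice of open subsets of the Sorgenfrey line $\mathbb R_\ell$ is a continuous valuation.
   Context: The Sorgenfrey line $\mathbb R_\ell$ is $\mathbb R$ with the topology generated by the half-open intervals $[a,b[$, $a<b$ (its open sets are Lebesgue measurable). A continuous valuation is a map $\nu:\mathcal OX\to[0,\infty]$ with $\nu(\emptyset)=0$, monotone, modular, and preserving suprema of directed families of open sets. *)

(* Defs.v *)
From HB Require Import structures.
From mathcomp Require Import all_boot all_order all_algebra.
From mathcomp Require Import all_classical all_reals all_analysis.
Set Implicit Arguments. Unset Strict Implicit. Unset Printing Implicit Defensive.
Import Order.TTheory GRing.Theory Num.Theory.
Local Open Scope classical_set_scope.
Local Open Scope ring_scope.

Definition sorgenfrey_open {R : realType} (U : set R) : Prop :=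
  forall x, U x -> exists a b : R, a < b /\ `[a, b[%classic x /\ `[a, b[%classic `<=` U.

Definition directed_family {T : Type} (D : set (set T)) : Prop :=
  D !=set0 /\ forall U V, D U -> D V -> exists2 W, D W & U `|` V `<=` W.

Local Open Scope ereal_scope.

Definition continuous_valuation {R : realType} {T : Type}
    (isopen : set T -> Prop) (nu : set T -> \bar R) : Prop :=
  [/\ (forall U, isopen U -> 0 <= nu U),
      nu set0 = 0,
      (forall U V, isopen U -> isopen V -> (U `<=` V)%classic -> nu U <= nu V),
      (forall U V, isopen U -> isopen V ->
         nu U + nu V = nu (U `|` V)%classic + nu (U `&` V)%classic) &
      (forall D : set (set T), (forall U, D U -> isopen U) -> directed_family D ->
         nu (\bigcup_(U in D) U)%classic = ereal_sup [set nu U | U in D]%classic)].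

(* Main.v *)
Require Import Defs.
From mathcomp Require Import all_boot all_order all_algebra.
From mathcomp Require Import all_classical all_reals all_analysis.
Set Implicit Arguments. Unset Strict Implicit. Unset Printing Implicit Defensive.
Import Order.TTheory GRing.Theory Num.Theory.
Local Open Scope classical_set_scope.
Local Open Scope ring_scope.

Section Key.
Variable R : realType.
Variable D : set (set R).
Hypothesis HD : forall U, D U -> sorgenfrey_open U.

Definition Pq (pq : rat * rat) : Prop :=
  exists2 U, D U & `]ratr pq.1, ratr pq.2[%classic `<=` U.

Definition J (k : nat) : set R :=
  match choice.unpickle k with
  | Some pq => if pselect (Pq pq) then `]ratr pq.1, ratr pq.2[%classic else set0
  | None => set0
  end.

Lemma J_meas k : measurable (J k).
Proof.
rewrite /J; destruct (choice.unpickle k) as [pq|]; last by [].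
by destruct (pselect (Pq pq)) => //=; exact: measurable_itv.
Qed.

Lemma J_sub k : D !=set0 -> exists2 U, D U & J k `<=` U.
Proof.
move=> [U0 DU0]; rewrite /J; destruct (choice.unpickle k) as [pq|]; last by exists U0.
by destruct (pselect (Pq pq)) as [[U DU sU]|nP]; [exists U | exists U0].
Qed.

Definition W := \bigcup_(U in D) U.
Definition O := \bigcup_k J k.

Lemma O_sub : O `<=` W.
Proof.
move=> x [k _]; rewrite /J; destruct (choice.unpickle k) as [pq|]; last by [].
destruct (pselect (Pq pq)) as [pP|]; last by []; move=> Jx; case: (pP) => U DU sU; exists U => //; exact: sU.
Qed.

Lemma cover x : W x -> exists b, x < b /\ `]x, b[%classic `<=` O.
Proof.
move=> [U DU Ux]; have [a [b [ab [xab sab]]]] := HD DU Ux.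
move: xab => /=; rewrite in_itv /= => /andP[ax xb].
exists b; split => // y /=; rewrite in_itv /= => /andP[xy yb].
have [p] := rat_in_itvoo xy; rewrite in_itv /= => /andP[xp py].
have [q] := rat_in_itvoo yb; rewrite in_itv /= => /andP[yq qb].
have Ppq : Pq (p, q).
  exists U => // z /=; rewrite in_itv /= => /andP[pz zq]; apply: sab => /=.
  rewrite in_itv /=; apply/andP; split.
    by rewrite (le_trans ax) // ltW // (lt_trans xp).
  exact: (lt_trans zq).
exists (choice.pickle (p, q)); first by []. rewrite /J choice.pickleK.
destruct (pselect (Pq (p,q))) as [pP|]; last by []. change (`]ratr p, ratr q[%classic y); rewrite /= in_itv /=; apply/andP; split; [exact: py | exact: yq].
Qed.

Lemma countable_rest : countable (W `\` O).
Proof.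
set S := W `\` O.
have [r Hr] : {r : R -> rat & forall x, S x -> x < ratr (r x) /\
    forall y, S y -> x < y -> ratr (r x) < y}.
  apply: (@choice _ _ (fun x q => S x -> x < ratr q /\
    forall y, S y -> x < y -> ratr q < y)) => x.
  have [Sx|nSx] := pselect (S x); last by exists 0%Q.
  have [b [xb sb]] := cover Sx.1.
  have [q] := rat_in_itvoo xb; rewrite in_itv /= => /andP[xq qb].
  exists q => _; split => // y [_ nOy] xy.
  rewrite (lt_le_trans qb) //; rewrite leNgt; apply/negP => yb.
  by apply: nOy; apply: sb => /=; rewrite in_itv /= xy yb.
apply/countable_injP; exists (fun x => choice.pickle (r x)).
move=> x y; rewrite !inE => Sx Sy /(pcan_inj choice.pickleK) rxy.
case: (ltgtP x y) => // [xy|yx].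
  have := (Hr x Sx).2 y Sy xy; have := (Hr y Sy).1.
  by rewrite rxy => h1 h2; have := lt_trans h2 h1; rewrite ltxx.
have := (Hr y Sy).2 x Sx yx; have := (Hr x Sx).1.
by rewrite rxy => h1 h2; have := lt_trans h2 h1; rewrite ltxx.
Qed.

Lemma O_meas : measurable O.
Proof. by apply: bigcup_measurable => k _; exact: J_meas. Qed.

Lemma rest_meas : measurable (W `\` O).
Proof.
apply: countable_measurable; first by move=> t; exact: measurable_set1.
exact: countable_rest.
Qed.

Lemma W_eq : W = O `|` (W `\` O).
Proof. by rewrite setDUK //; exact: O_sub. Qed.

Lemma W_meas : measurable W.
Proof. rewrite W_eq; apply: measurableU; [exact: O_meas|exact: rest_meas]. Qed.

Local Open Scope ereal_scope.

Lemma W_le_O : lebesgue_measure W <= lebesgue_measure O.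
Proof.
rewrite {1}W_eq (le_trans (measureU2 (@lebesgue_measure R) O_meas rest_meas)) //.
by rewrite [X in _ + X](countable_lebesgue_measure0 countable_rest) adde0.
Qed.

End Key.

Lemma sorgenfrey_meas (R : realType) (U : set R) :
  sorgenfrey_open U -> measurable U.
Proof.
move=> oU; have HD : forall V, [set U] V -> sorgenfrey_open V by move=> V ->.
have := W_meas HD; rewrite /W bigcup_set1; exact.
Qed.

Local Open Scope ereal_scope.

Theorem corollary4p8 (R : realType) :
  continuous_valuation (@sorgenfrey_open R) (@lebesgue_measure R).
Proof.
split.
- by move=> U _; exact: measure_ge0.
- exact: measure0.
- move=> U V oU oV UV; apply: le_measure => //; rewrite inE;
  exact: sorgenfrey_meas.
- move=> U V oU oV; have mU := sorgenfrey_meas oU; have mV := sorgenfrey_meas oV.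
  rewrite (measureDI (@lebesgue_measure R) mV mU) addeA -(measureU (@lebesgue_measure R)) //.
  + by rewrite setUDr setDv setD0 setIC.
  + exact: measurableD.
  + by apply/seteqP; split => x //= [? []].
- move=> D HD [D0 Ddir]; apply/eqP; rewrite eq_le; apply/andP; split; last first.
    apply: ge_ereal_sup => _ [U DU <-]; apply: le_measure; rewrite ?inE.
    + exact: sorgenfrey_meas (HD _ DU).
    + exact: (W_meas HD).
    + by move=> x Ux; exists U.
  apply: (le_trans (W_le_O HD)).
  pose F n := \big[setU/set0]_(i < n.+1) J D i.
  have mF n : measurable (F n).
    by apply: bigsetU_measurable => i _; exact: J_meas.
  have FO : \bigcup_n F n = O D by rewrite bigcup_bigsetU_bigcup.
  have ndF : {homo F : n m / (n <= m)%N >-> (n <= m)%O}.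
    by move=> n m nm; apply/subsetPset; exact: (@subset_bigsetU _ (J D) n.+1 m.+1).
  have mFO : measurable (\bigcup_n F n) by rewrite FO; exact: O_meas.
  have := nondecreasing_cvg_mu (mu := @lebesgue_measure R) mF mFO ndF.
  rewrite FO => cv; rewrite -(cvg_lim _ cv) //; apply: lime_le.
    exact: cvgP cv.
  apply: nearW => n /=.
  have [U DU FU] : exists2 U, D U & F n `<=` U.
    rewrite /F; elim: n => [|n [U DU FU]].
      have [U DU sU] := @J_sub R D 0 D0; exists U => //.
      rewrite big_ord_recr big_ord0 /= => x [//|]; exact: sU.
    have [V DV sV] := @J_sub R D n.+1 D0.
    have [Wd DW sW] := Ddir U V DU DV; exists Wd => //.
    rewrite big_ord_recr /= => x [/FU|/sV] h; apply: sW; [left|right]; exact: h.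
  apply: (le_trans _ (ereal_sup_ubound _)); last by exists U.
  apply: le_measure; rewrite ?inE //=; [exact: mF | exact: sorgenfrey_meas (HD _ DU)].
Qed.
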